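(* Let $E=\ell^\infty(\mathbb N^2)$ (complex), let $\mathcal X$ be its closed unit ball with the weak-* topology, with elements written $x=(x_{j,k})_{j,k=1}^\infty$, and let $\mathcal A$ be the uniform algebra on $\mathcal X$ generated by the coordinate projections $p_{j,k}(x)=x_{j,k}$. Then there is a unital endomorphism of $\mathcal A$ which is a Riesz operator but is not power compact. Specifically, the map $\phi:\mathcal X\to\mathcal X$, $(\phi(x))_{j,k}=x_{j,k+1}/(k+1)$, induces such an endomorphism $Tf=f\circ\phi$.
   Context: $\mathcal X$ with the weak-* topology is compact metrizable; the uniform algebra generated by the $p_{j,k}$ is the closure in $C(\mathcal X)$ (supremum norm) of the polynomials in $1$ and the $p_{j,k}$. A bounded operator $T$ is a Riesz operator if $\lim_{n}\left[\inf\{\|T^n-K\|:K \text{ compact}\}\right]^{1/n}=0$; it is power compact if $T^N$ is compact for some positive integer $N$. *)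

(* Defs.v *)
From Stdlib Require Import Reals.
From Coquelicot Require Import Coquelicot.
Open Scope R_scope.

(* Points of E = l^oo(N^2) (complex); indices are 0-based here. *)
Definition pt := nat -> nat -> C.

Definition inX (x : pt) : Prop := forall j k, Cmod (x j k) <= 1.

(* Functions on X (values off X are irrelevant). *)
Definition fn := pt -> C.

Definition eqX (f g : fn) : Prop := forall x, inX x -> f x = g x.

Inductive polyfun : fn -> Prop :=
  | pf_const (c : C) : polyfun (fun _ => c)
  | pf_coord (j k : nat) : polyfun (fun x => x j k)
  | pf_add f g : polyfun f -> polyfun g -> polyfun (fun x => Cplus (f x) (g x))
  | pf_mul f g : polyfun f -> polyfun g -> polyfun (fun x => Cmult (f x) (g x)).

Definition supnorm (f : fn) : Rbar :=
  Lub_Rbar (fun r => exists x, inX x /\ r = Cmod (f x)).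

Definition in_A (f : fn) : Prop :=
  forall eps : R, 0 < eps ->
    exists P, polyfun P /\ forall x, inX x -> Cmod (Cminus (f x) (P x)) <= eps.

Definition op := fn -> fn.

Definition op_sub (S K : op) : op := fun f x => Cminus (S f x) (K f x).

Definition op_pow (S : op) (n : nat) : op := fun f => Nat.iter n S f.

Definition lin_endo (S : op) : Prop :=
  (forall f, in_A f -> in_A (S f)) /\
  (forall f g, in_A f -> in_A g -> eqX f g -> eqX (S f) (S g)) /\
  (forall f g, in_A f -> in_A g ->
     eqX (S (fun x => Cplus (f x) (g x))) (fun x => Cplus (S f x) (S g x))) /\
  (forall (c : C) f, in_A f ->
     eqX (S (fun x => Cmult c (f x))) (fun x => Cmult c (S f x))).

Definition opnorm (S : op) : Rbar :=
  Lub_Rbar (fun r => exists f, in_A f /\ Rbar_le (supnorm f) 1 /\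
                               supnorm (S f) = Finite r).

(* Compact operator on A: linear endomorphism mapping the unit ball to a
   relatively compact set (every sequence in the image of the unit ball has
   a subsequence converging in A; A is a metric space). *)
Definition compact_op (K : op) : Prop :=
  lin_endo K /\
  forall u : nat -> fn,
    (forall n, in_A (u n) /\ Rbar_le (supnorm (u n)) 1) ->
    exists (s : nat -> nat) (g : fn),
      (forall n, (s n < s (S n))%nat) /\ in_A g /\
      is_lim_seq (fun n => supnorm (fun x => Cminus (K (u (s n)) x) (g x)))
                 (Finite 0).

Definition ess_norm_pow (S : op) (n : nat) : Rbar :=
  Glb_Rbar (fun r => exists K, compact_op K /\
                       opnorm (op_sub (op_pow S n) K) = Finite r).

Definition nroot (a : R) (n : nat) : R :=
  if Rle_dec a 0 then 0 else Rpower a (/ INR n).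

Definition riesz_op (S : op) : Prop :=
  is_lim_seq (fun n => nroot (real (ess_norm_pow S n)) n) (Finite 0).

Definition power_compact (S : op) : Prop :=
  exists N : nat, (1 <= N)%nat /\ compact_op (op_pow S N).

(* The map phi: (phi x)_{j,k} = x_{j,k+1}/(k+1) in 1-based indexing,
   i.e. x j (k+1) / (k+2) in 0-based indexing. *)
Definition phi (x : pt) : pt :=
  fun j k => Cdiv (x j (S k)) (RtoC (INR (S (S k)))).

Definition Tphi : op := fun f x => f (phi x).

(* Main.v *)
Require Import Defs.
From Stdlib Require Import Reals Lra Lia Psatz FunctionalExtensionality IndefiniteDescription Rtopology ZArith Arith.
From Coquelicot Require Import Coquelicot.
Open Scope R_scope.

Definition z0 : pt := fun _ _ => RtoC 0.
Lemma inX_z0 : inX z0.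
Proof. intros j k; unfold z0; rewrite Cmod_0; lra. Qed.

Lemma sup_ge f x : inX x -> Rbar_le (Cmod (f x)) (supnorm f).
Proof.
  intros Hx. unfold supnorm. destruct (Lub_Rbar_correct (fun r => exists x, inX x /\ r = Cmod (f x))) as [H1 _].
  apply H1. eauto.
Qed.

Lemma sup_le f M : (forall x, inX x -> Cmod (f x) <= M) -> Rbar_le (supnorm f) M.
Proof.
  intros H. unfold supnorm. destruct (Lub_Rbar_correct (fun r => exists x, inX x /\ r = Cmod (f x))) as [_ H2].
  apply H2. intros r [x [Hx ->]]. simpl. auto.
Qed.

Lemma sup_fin f M : (forall x, inX x -> Cmod (f x) <= M) ->
  supnorm f = Finite (real (supnorm f)) /\ real (supnorm f) <= M /\
  forall x, inX x -> Cmod (f x) <= real (supnorm f).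
Proof.
  intros H. pose proof (sup_le f M H) as H1. pose proof (sup_ge f z0 inX_z0) as H2.
  destruct (supnorm f) as [s| |] eqn:E; simpl in *; try tauto.
  split; auto. split; auto. intros x Hx. pose proof (sup_ge f x Hx). rewrite E in H0. exact H0.
Qed.

Lemma unit_ball f x : Rbar_le (supnorm f) 1 -> inX x -> Cmod (f x) <= 1.
Proof.
  intros H Hx. pose proof (sup_ge f x Hx). destruct (supnorm f); simpl in *; try tauto. lra.
Qed.

Lemma sup_const f c : (forall x, inX x -> Cmod (f x) = c) -> supnorm f = Finite c.
Proof.
  intros H. destruct (sup_fin f c) as [E [H1 H2]]. { intros; rewrite H; auto; lra. }
  rewrite E. f_equal. pose proof (H2 z0 inX_z0). rewrite H in H0 by apply inX_z0. lra.
Qed.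

Fixpoint pD (D : nat) (Q : C -> C) : Prop :=
  match D with
  | O => forall l, Q l = RtoC 0
  | S D => exists c Q', pD D Q' /\ forall l, Q l = Cplus c (Cmult l (Q' l))
  end.

Lemma pD_ext D Q Q2 : pD D Q -> (forall l, Q l = Q2 l) -> pD D Q2.
Proof.
  destruct D; simpl; intros H E.
  - intros l; rewrite <- E; auto.
  - destruct H as [c [Q' [H1 H2]]]. exists c, Q'. split; auto. intros l; rewrite <- E; auto.
Qed.

Lemma pD_zero D : pD D (fun _ => RtoC 0).
Proof.
  induction D; simpl; auto. exists (RtoC 0), (fun _ => RtoC 0). split; auto. intros; ring.
Qed.

Lemma pD_mono D Q : pD D Q -> pD (S D) Q.
Proof.
  revert Q; induction D; intros Q H.
  - simpl in *. exists (RtoC 0), (fun _ => RtoC 0). split; auto. intros l; rewrite H; ring.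
  - destruct H as [c [Q' [H1 H2]]]. exists c, Q'. split; auto.
Qed.

Lemma pD_mono_le D D' Q : (D <= D')%nat -> pD D Q -> pD D' Q.
Proof. induction 1; auto. intros; apply pD_mono; auto. Qed.

Lemma pD_add D Q1 Q2 : pD D Q1 -> pD D Q2 -> pD D (fun l => Cplus (Q1 l) (Q2 l)).
Proof.
  revert Q1 Q2; induction D; simpl; intros Q1 Q2 H1 H2.
  - intros l; rewrite H1, H2; ring.
  - destruct H1 as [c [Q' [H1 E1]]], H2 as [d [R' [H2 E2]]].
    exists (Cplus c d), (fun l => Cplus (Q' l) (R' l)). split; auto.
    intros l; rewrite E1, E2; ring.
Qed.

Lemma pD_scal D Q a : pD D Q -> pD D (fun l => Cmult a (Q l)).
Proof.
  revert Q; induction D; simpl; intros Q H.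
  - intros l; rewrite H; ring.
  - destruct H as [c [Q' [H1 E1]]]. exists (Cmult a c), (fun l => Cmult a (Q' l)). split; auto.
    intros l; rewrite E1; ring.
Qed.

Lemma pD_mul D1 D2 Q1 Q2 : pD D1 Q1 -> pD D2 Q2 -> pD (D1 + D2) (fun l => Cmult (Q1 l) (Q2 l)).
Proof.
  revert Q1; induction D1; intros Q1 H1 H2.
  - simpl in H1. eapply pD_ext. apply (pD_zero (0 + D2)). intros l; rewrite H1; ring.
  - destruct H1 as [c [Q' [H1 E1]]].
    destruct (pD_mono _ _ H2) as [c2 [Q2' [H3 E2]]].
    simpl. exists (Cmult c c2), (fun l => Cplus (Cmult c (Q2' l)) (Cmult (Q' l) (Q2 l))).
    split.
    + apply pD_add. apply pD_scal. eapply pD_mono_le; [|exact H3]. lia.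
      apply IHD1; auto.
    + intros l. rewrite E1, (E2 l). ring.
Qed.

Definition scale (a : C) (z : pt) : pt := fun j k => Cmult a (z j k).

Lemma polyfun_pD P : polyfun P -> forall z, exists D, pD D (fun l => P (scale l z)).
Proof.
  induction 1; intros z.
  - exists 1%nat. simpl. exists c, (fun _ => RtoC 0). split; auto. intros; ring.
  - exists 2%nat. simpl. exists (RtoC 0), (fun _ => z j k). split.
    + exists (z j k), (fun _ => RtoC 0). split; auto. intros; ring.
    + intros l. unfold scale. ring.
  - destruct (IHpolyfun1 z) as [D1 H1], (IHpolyfun2 z) as [D2 H2].
    exists (D1 + D2)%nat. apply pD_add; [apply (pD_mono_le D1)|apply (pD_mono_le D2)]; auto; lia.
  - destruct (IHpolyfun1 z) as [D1 H1], (IHpolyfun2 z) as [D2 H2].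
    exists (D1 + D2)%nat. apply pD_mul; auto.
Qed.

Fixpoint csum (f : nat -> C) (n : nat) : C :=
  match n with O => RtoC 0 | S n => Cplus (csum f n) (f n) end.

Lemma csum_ext f g n : (forall k, (k < n)%nat -> f k = g k) -> csum f n = csum g n.
Proof. induction n; simpl; intros H; auto. rewrite IHn, H; auto. Qed.
Lemma csum_plus f g n : csum (fun k => Cplus (f k) (g k)) n = Cplus (csum f n) (csum g n).
Proof. induction n; simpl. ring. rewrite IHn; ring. Qed.
Lemma csum_scal a f n : csum (fun k => Cmult a (f k)) n = Cmult a (csum f n).
Proof. induction n; simpl. ring. rewrite IHn; ring. Qed.
Lemma csum_one n : csum (fun _ => RtoC 1) n = RtoC (INR n).
Proof. induction n. reflexivity. cbn [csum]. rewrite IHn, S_INR, RtoC_plus. auto. Qed.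
Lemma csum_bound f n B : (forall k, (k < n)%nat -> Cmod (f k) <= B) -> Cmod (csum f n) <= INR n * B.
Proof.
  induction n; cbn [csum]; intros H. simpl; rewrite Cmod_0; lra.
  rewrite S_INR. eapply Rle_trans. apply Cmod_triangle.
  assert (Cmod (csum f n) <= INR n * B) by (apply IHn; auto). specialize (H n ltac:(lia)). lra.
Qed.
Lemma csum_geom z n : Cmult (Cminus z (RtoC 1)) (csum (Cpow z) n) = Cminus (Cpow z n) (RtoC 1).
Proof. induction n; cbn [csum]. simpl; ring. rewrite Cmult_plus_distr_l, IHn. rewrite Cpow_S. ring. Qed.
Lemma geom_zero z n : z <> RtoC 1 -> Cpow z n = RtoC 1 -> csum (Cpow z) n = RtoC 0.
Proof.
  intros H1 H2. pose proof (csum_geom z n) as E. rewrite H2 in E.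
  assert (Hz : Cminus z (RtoC 1) <> RtoC 0) by (apply Cminus_eq_contra; auto).
  replace (csum (Cpow z) n) with (Cmult (Cinv (Cminus z 1)) (Cmult (Cminus z 1) (csum (Cpow z) n))).
  rewrite E. ring. rewrite Cmult_assoc, Cinv_l; auto. ring.
Qed.

Definition cis (t : R) : C := (cos t, sin t).
Lemma cis_pow t n : Cpow (cis t) n = cis (INR n * t).
Proof.
  induction n.
  - simpl. unfold cis. rewrite Rmult_0_l, cos_0, sin_0. reflexivity.
  - rewrite Cpow_S, IHn, S_INR. unfold cis, Cmult; simpl fst; simpl snd.
    replace ((INR n + 1) * t) with (t + INR n * t) by ring.
    rewrite cos_plus, sin_plus. apply injective_projections; simpl; ring.
Qed.
Lemma Cmod_cis t : Cmod (cis t) = 1.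
Proof.
  unfold Cmod, cis; simpl fst; simpl snd. rewrite <- sqrt_1. f_equal. pose proof (sin2_cos2 t). unfold Rsqr in H. simpl. lra.
Qed.
Lemma cis_ne1 t : 0 < t < 2 * PI -> cis t <> RtoC 1.
Proof.
  intros H E. unfold cis, RtoC in E. injection E as E1 E2.
  destruct (Rlt_le_dec t PI).
  - pose proof (sin_gt_0 t ltac:(lra) r). lra.
  - destruct (Req_dec t PI). subst. rewrite cos_PI in E1. lra.
    pose proof (sin_lt_0 t ltac:(lra) ltac:(lra)). lra.
Qed.

Definition om (N : nat) : C := cis (2 * PI / INR N).
Lemma om_pow_N N : (0 < N)%nat -> Cpow (om N) N = RtoC 1.
Proof.
  intros H. unfold om. rewrite cis_pow. replace (INR N * (2 * PI / INR N)) with (2 * PI).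
  unfold cis. rewrite cos_2PI, sin_2PI. reflexivity.
  field. apply not_0_INR; lia.
Qed.
Lemma om_ne1 N e : (0 < e < N)%nat -> Cpow (om N) e <> RtoC 1.
Proof.
  intros H. unfold om. rewrite cis_pow. apply cis_ne1.
  assert (0 < INR e) by (apply lt_0_INR; lia). assert (INR e < INR N) by (apply lt_INR; lia).
  pose proof PI_RGT_0.
  split. apply Rmult_lt_0_compat; auto. apply Rdiv_lt_0_compat; lra.
  replace (INR e * (2 * PI / INR N)) with (2 * PI * (INR e / INR N)) by (field; lra).
  rewrite <- (Rmult_1_r (2 * PI)) at 2. apply Rmult_lt_compat_l. lra.
  apply (Rmult_lt_reg_r (INR N)); [lra|]. unfold Rdiv. rewrite Rmult_assoc, Rinv_l by lra. lra.
Qed.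
Lemma Cmod_om_pow N k : Cmod (Cpow (om N) k) = 1.
Proof. unfold om. rewrite cis_pow. apply Cmod_cis. Qed.

Definition zeta N m := Cpow (om N) (N - m).
Definition Acoef (N : nat) (Q : C -> C) (m : nat) : C :=
  Cmult (Cinv (RtoC (INR N))) (csum (fun k => Cmult (Q (Cpow (om N) k)) (Cpow (zeta N m) k)) N).

Lemma zeta_pow_N N m : (0 < N)%nat -> Cpow (zeta N m) N = RtoC 1.
Proof.
  intros H. unfold zeta. rewrite <- Cpow_mult_r, Nat.mul_comm, Cpow_mult_r, om_pow_N by auto.
  apply Cpow_1_l.
Qed.

Lemma A_const N c m : (m < N)%nat -> Acoef N (fun _ => c) m = if Nat.eqb m 0 then c else RtoC 0.
Proof.
  intros H. unfold Acoef. rewrite csum_scal.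
  assert (HN : RtoC (INR N) <> RtoC 0). { intros E. apply RtoC_inj in E. apply (not_0_INR N); lia || auto. }
  destruct (Nat.eqb_spec m 0).
  - subst. unfold zeta. rewrite Nat.sub_0_r, om_pow_N by lia.
    rewrite (csum_ext _ (fun _ => RtoC 1)) by (intros; apply Cpow_1_l).
    rewrite csum_one. field. auto.
  - rewrite geom_zero. ring. unfold zeta. apply om_ne1. lia. apply zeta_pow_N. lia.
Qed.

Lemma A_zero N Q m : (forall l, Q l = RtoC 0) -> Acoef N Q m = RtoC 0.
Proof.
  intros H. unfold Acoef. rewrite (csum_ext _ (fun k => Cmult 0 (Cpow (zeta N m) k))).
  rewrite csum_scal. ring. intros; rewrite H; auto.
Qed.

Lemma A_horner N c Q m : (0 < N)%nat -> (m < N)%nat ->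
  Acoef N (fun l => Cplus c (Cmult l (Q l))) m =
  Cplus (if Nat.eqb m 0 then c else RtoC 0) (Acoef N Q (if Nat.eqb m 0 then (N - 1)%nat else (m - 1)%nat)).
Proof.
  intros HN Hm. rewrite <- (A_const N c m) by auto. unfold Acoef.
  rewrite <- Cmult_plus_distr_l, <- csum_plus. f_equal. apply csum_ext. intros k Hk.
  assert (Z : Cmult (om N) (zeta N m) = zeta N (if Nat.eqb m 0 then (N - 1)%nat else (m - 1)%nat)).
  { unfold zeta. rewrite <- Cpow_S. destruct (Nat.eqb_spec m 0).
    - subst. rewrite Cpow_S, Nat.sub_0_r, om_pow_N by auto. replace (N - (N-1))%nat with 1%nat by lia.
      rewrite Cpow_1_r. ring.
    - f_equal. lia. }
  rewrite <- Z, Cpow_mult_l. ring.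
Qed.

Lemma A_bound N Q m B : (0 < N)%nat -> (forall k, Cmod (Q (Cpow (om N) k)) <= B) -> Cmod (Acoef N Q m) <= B.
Proof.
  intros HN H. unfold Acoef. rewrite Cmod_mult.
  assert (0 < INR N) by (apply lt_0_INR; auto).
  rewrite <- RtoC_inv by lra. rewrite Cmod_R, Rabs_right by (apply Rle_ge, Rlt_le, Rinv_0_lt_compat; auto).
  assert (Cmod (csum (fun k => Cmult (Q (Cpow (om N) k)) (Cpow (zeta N m) k)) N) <= INR N * B).
  { apply csum_bound. intros k _. rewrite Cmod_mult. unfold zeta. rewrite <- Cpow_mult_r, Cmod_om_pow. rewrite Rmult_1_r. auto. }
  apply (Rmult_le_compat_l (/ INR N)) in H1. rewrite <- Rmult_assoc, Rinv_l in H1 by lra. lra.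
  apply Rlt_le, Rinv_0_lt_compat; auto.
Qed.

Lemma A_ext N Q Q2 m : (forall l, Q l = Q2 l) -> Acoef N Q m = Acoef N Q2 m.
Proof. intros H. unfold Acoef. f_equal. apply csum_ext. intros; rewrite H; auto. Qed.

Lemma vanish N : (0 < N)%nat -> forall D Q, pD D Q -> forall m, (D <= m < N)%nat -> Acoef N Q m = RtoC 0.
Proof.
  intros HN D. induction D; intros Q H m Hm.
  - apply A_zero. exact H.
  - destruct H as [c [Q' [H1 E]]]. rewrite (A_ext N Q _ m E).
    rewrite A_horner by lia. destruct (Nat.eqb_spec m 0). lia.
    rewrite (IHD Q' H1) by lia. ring.
Qed.

Lemma coef_shift N D Q c Q' B : (0 < N)%nat -> pD D Q' -> (S D <= N)%nat ->
  (forall l, Q l = Cplus c (Cmult l (Q' l))) ->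
  (forall m, (m < N)%nat -> Cmod (Acoef N Q m) <= B) -> 0 <= B ->
  Cmod c <= B /\ forall m, (m < N)%nat -> Cmod (Acoef N Q' m) <= B.
Proof.
  intros HN H1 HD E HB B0. split.
  - specialize (HB 0%nat HN). rewrite (A_ext N Q _ 0 E), A_horner in HB by lia. simpl in HB.
    rewrite (vanish N HN D Q' H1) in HB by lia. rewrite Cplus_0_r in HB. auto.
  - intros m Hm. destruct (Nat.eq_dec m (N - 1)).
    + subst. rewrite (vanish N HN D Q' H1) by lia. rewrite Cmod_0; auto.
    + specialize (HB (S m) ltac:(lia)). rewrite (A_ext N Q _ _ E), A_horner in HB by lia.
      simpl in HB. replace (m - 0)%nat with m in HB by lia. rewrite Cplus_0_l in HB. auto.
Qed.

Lemma horner_bound N : (0 < N)%nat -> forall D Q, pD D Q -> (D <= N)%nat -> forall B, 0 <= B ->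
  (forall m, (m < N)%nat -> Cmod (Acoef N Q m) <= B) -> forall r, 0 <= r < 1 ->
  Cmod (Q (RtoC r)) <= B / (1 - r).
Proof.
  intros HN D. induction D; intros Q H HD B B0 HB r Hr.
  - simpl in H. rewrite H, Cmod_0. apply Rmult_le_pos; auto. apply Rlt_le, Rinv_0_lt_compat; lra.
  - destruct H as [c [Q' [H1 E]]].
    destruct (coef_shift N D Q c Q' B HN H1 HD E HB B0) as [Hc HB'].
    pose proof (IHD Q' H1 ltac:(lia) B B0 HB' r Hr) as IH.
    rewrite E. eapply Rle_trans. apply Cmod_triangle. rewrite Cmod_mult, Cmod_R, Rabs_right by lra.
    assert (r * Cmod (Q' r) <= r * (B / (1 - r))) by (apply Rmult_le_compat_l; lra).
    replace (B / (1 - r)) with (B + r * (B / (1 - r))) by (field; lra). lra.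
Qed.

Lemma diff_bound N D Q B r : (0 < N)%nat -> pD D Q -> (D <= N)%nat -> 0 <= B ->
  (forall m, (m < N)%nat -> Cmod (Acoef N Q m) <= B) -> 0 <= r < 1 ->
  Cmod (Cminus (Q (RtoC r)) (Q (RtoC 0))) <= r * (B / (1 - r)).
Proof.
  intros HN H HD B0 HB Hr. destruct D.
  - simpl in H. rewrite !H. replace (Cminus 0 0) with (RtoC 0) by ring. rewrite Cmod_0.
    apply Rmult_le_pos. lra. apply Rmult_le_pos; auto. apply Rlt_le, Rinv_0_lt_compat; lra.
  - destruct H as [c [Q' [H1 E]]].
    destruct (coef_shift N D Q c Q' B HN H1 HD E HB B0) as [Hc HB'].
    pose proof (horner_bound N HN D Q' H1 ltac:(lia) B B0 HB' r Hr) as IH.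
    rewrite !E. replace (Cminus (Cplus c (Cmult r (Q' r))) (Cplus c (Cmult 0 (Q' 0)))) with (Cmult r (Q' r)) by ring.
    rewrite Cmod_mult, Cmod_R, Rabs_right by lra. apply Rmult_le_compat_l; lra.
Qed.

Lemma scale_inX a z : Cmod a <= 1 -> inX z -> inX (scale a z).
Proof.
  intros Ha Hz j k. unfold scale. rewrite Cmod_mult. specialize (Hz j k).
  pose proof (Cmod_ge_0 a). pose proof (Cmod_ge_0 (z j k)). nra.
Qed.

Lemma polyfun_inA P : polyfun P -> in_A P.
Proof. intros H eps He. exists P. split; auto. intros. unfold Cminus. rewrite Cplus_opp_r, Cmod_0. lra. Qed.

Lemma approx_le a b c : (forall eps, 0 < eps -> a <= b + eps * c) -> 0 <= c -> a <= b.
Proof.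
  intros H Hc. destruct (Rle_dec a b); auto. exfalso.
  specialize (H ((a - b) / (2 * (c + 1))) ltac:(apply Rdiv_lt_0_compat; lra)).
  assert ((a - b) / (2 * (c + 1)) * c < a - b).
  { apply (Rmult_lt_reg_r (2 * (c+1))). lra. field_simplify; try lra. nra. }
  lra.
Qed.

Lemma schwarz f y r : in_A f -> (forall x, inX x -> Cmod (f x) <= 1) -> 0 < r <= 1/2 ->
  (forall j k, Cmod (y j k) <= r) -> Cmod (Cminus (f y) (f z0)) <= 2 * r.
Proof.
  intros Hf Hf1 Hr Hy. apply (approx_le _ _ (2 + 2 * r)); [|lra].
  intros eps He. destruct (Hf eps He) as [P [HP HPf]].
  set (z := scale (Cinv (RtoC r)) y).
  assert (Hrc : RtoC r <> RtoC 0) by (intros E; apply RtoC_inj in E; lra).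
  assert (Hz : inX z).
  { intros j k. unfold z, scale. rewrite Cmod_mult, Cmod_inv, Cmod_R, Rabs_right by (auto; lra).
    apply (Rmult_le_reg_l r); [lra|]. rewrite <- Rmult_assoc, Rinv_r by lra. specialize (Hy j k). lra. }
  destruct (polyfun_pD P HP z) as [D HD].
  set (Q := fun l => P (scale l z)) in HD.
  assert (HB : forall m, (m < S D)%nat -> Cmod (Acoef (S D) Q m) <= 1 + eps).
  { intros m _. apply A_bound. lia. intros k. unfold Q.
    assert (Hx : inX (scale (Cpow (om (S D)) k) z)) by (apply scale_inX; auto; rewrite Cmod_om_pow; lra).
    specialize (HPf _ Hx). specialize (Hf1 _ Hx).
    replace (P (scale (Cpow (om (S D)) k) z)) with
      (Cminus (f (scale (Cpow (om (S D)) k) z)) (Cminus (f (scale (Cpow (om (S D)) k) z)) (P (scale (Cpow (om (S D)) k) z)))) by ring.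
    eapply Rle_trans. unfold Cminus at 1. apply Cmod_triangle. rewrite Cmod_opp. lra. }
  pose proof (diff_bound (S D) D Q (1 + eps) r ltac:(lia) HD ltac:(lia) ltac:(lra) HB ltac:(lra)) as Hd.
  assert (Ey : Q (RtoC r) = P y).
  { unfold Q, z. f_equal. apply functional_extensionality; intros j. apply functional_extensionality; intros k.
    unfold scale. field. auto. }
  assert (E0 : Q (RtoC 0) = P z0).
  { unfold Q, z. f_equal. apply functional_extensionality; intros j. apply functional_extensionality; intros k.
    unfold scale, z0. ring. }
  rewrite Ey, E0 in Hd.
  assert (Hq : (1 + eps) / (1 - r) <= 2 * (1 + eps)).
  { apply (Rmult_le_reg_r (1 - r)); [lra|]. unfold Rdiv; rewrite Rmult_assoc, Rinv_l by lra. nra. }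
  assert (r * ((1 + eps) / (1 - r)) <= 2 * r * (1 + eps)) by nra.
  pose proof (HPf y ltac:(intros j k; specialize (Hy j k); lra)) as H1.
  pose proof (HPf z0 inX_z0) as H2.
  replace (Cminus (f y) (f z0)) with
    (Cplus (Cplus (Cminus (f y) (P y)) (Cminus (P y) (P z0))) (Copp (Cminus (f z0) (P z0)))) by ring.
  eapply Rle_trans. apply Cmod_triangle. rewrite Cmod_opp.
  eapply Rle_trans. apply Rplus_le_compat_r. apply Cmod_triangle. nra.
Qed.

Lemma bw_real (a : nat -> R) : (forall n, Rabs (a n) <= 1) ->
  exists (s : nat -> nat) l, (forall n, (s n < s (S n))%nat) /\ is_lim_seq (fun n => a (s n)) (Finite l).
Proof.
  intros Ha. destruct (Bolzano_Weierstrass a (fun c => -1 <= c <= 1) (compact_P3 (-1) 1)) as [l Hl].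
  { intros n. specialize (Ha n). apply Rabs_le_between in Ha. auto. }
  assert (H : forall N n : nat, exists p, (N <= p)%nat /\ Rabs (a p - l) < / (INR n + 1)).
  { intros N n. assert (Hp : 0 < / (INR n + 1)) by (apply Rinv_0_lt_compat; pose proof (pos_INR n); lra).
    destruct (Hl (disc l (mkposreal _ Hp)) N) as [p [H1 H2]].
    exists (mkposreal _ Hp). intros y Hy; exact Hy.
    exists p. split; auto. }
  set (ch := fun N n => proj1_sig (constructive_indefinite_description _ (H N n))).
  assert (Hch : forall N n, (N <= ch N n)%nat /\ Rabs (a (ch N n) - l) < / (INR n + 1)).
  { intros N n. unfold ch. destruct (constructive_indefinite_description _ (H N n)); auto. }
  set (s := fix s n := match n with O => ch O O | S m => ch (S (s m)) (S m) end).
  exists s, l. split.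
  - intros n. simpl. apply (Hch (S (s n)) (S n)).
  - apply is_lim_seq_Reals. intros eps He.
    destruct (archimed (/ eps)) as [Ha1 _].
    assert (0 <= IZR (up (/ eps))). { pose proof (Rinv_0_lt_compat eps He). lra. }
    exists (Z.to_nat (up (/ eps))). intros n Hn. unfold Rdist.
    assert (Hs : Rabs (a (s n) - l) < / (INR n + 1)) by (destruct n; apply Hch).
    eapply Rlt_trans. exact Hs.
    assert (INR (Z.to_nat (up (/ eps))) <= INR n) by (apply le_INR; lia).
    rewrite INR_IZR_INZ, Z2Nat.id in H1 by (apply le_0_IZR; auto).
    apply (Rmult_lt_reg_l (INR n + 1)). pose proof (pos_INR n); lra.
    rewrite Rinv_r by (pose proof (pos_INR n); lra).
    apply (Rmult_lt_reg_l (/ eps)). apply Rinv_0_lt_compat; auto.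
    replace (/ eps * ((INR n + 1) * eps)) with (INR n + 1) by (field; lra). lra.
Qed.

Lemma incr_mono (s : nat -> nat) : (forall n, (s n < s (S n))%nat) -> forall m n, (m < n)%nat -> (s m < s n)%nat.
Proof. intros H m n Hmn. induction Hmn. auto. specialize (H m0). lia. Qed.

Lemma Cmod_le_sum (x : C) : Cmod x <= 2 * (Rabs (fst x) + Rabs (snd x)).
Proof.
  eapply Rle_trans. apply Cmod_2Rmax.
  assert (sqrt 2 <= 2). { rewrite <- (sqrt_square 2) at 2 by lra. apply sqrt_le_1; lra. }
  assert (0 <= Rmax (Rabs (fst x)) (Rabs (snd x)) <= Rabs (fst x) + Rabs (snd x)).
  { pose proof (Rabs_pos (fst x)); pose proof (Rabs_pos (snd x)). unfold Rmax; destruct Rle_dec; lra. }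
  pose proof (sqrt_pos 2). nra.
Qed.

Lemma bw_complex (u : nat -> C) : (forall n, Cmod (u n) <= 1) ->
  exists (s : nat -> nat) (l : C), (forall n, (s n < s (S n))%nat) /\
    is_lim_seq (fun n => Cmod (Cminus (u (s n)) l)) (Finite 0).
Proof.
  intros Hu.
  destruct (bw_real (fun n => fst (u n))) as [s1 [l1 [Hs1 H1]]].
  { intros n. eapply Rle_trans; [|apply (Hu n)]. eapply Rle_trans; [|apply Rmax_Cmod]. apply Rmax_l. }
  destruct (bw_real (fun n => snd (u (s1 n)))) as [s2 [l2 [Hs2 H2]]].
  { intros n. eapply Rle_trans; [|apply (Hu (s1 n))]. eapply Rle_trans; [|apply Rmax_Cmod]. apply Rmax_r. }
  exists (fun n => s1 (s2 n)), (l1, l2). split.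
  - intros n. apply incr_mono; auto.
  - apply (is_lim_seq_subseq _ _ s2 (eventually_subseq s2 Hs2)) in H1.
    apply is_lim_seq_le_le with (u := fun _ => 0)
      (w := fun n => 2 * (Rabs (fst (u (s1 (s2 n))) - l1) + Rabs (snd (u (s1 (s2 n))) - l2))).
    + intros n. split. apply Cmod_ge_0. eapply Rle_trans. apply Cmod_le_sum. simpl. unfold Rminus. lra.
    + apply is_lim_seq_const.
    + assert (A1 : is_lim_seq (fun n => Rabs (fst (u (s1 (s2 n))) - l1)) 0).
      { replace (Finite 0) with (Rbar_abs (Finite (l1 - l1))) by (simpl; rewrite Rminus_diag, Rabs_R0; auto).
        apply (is_lim_seq_abs (fun n => fst (u (s1 (s2 n))) - l1)). apply is_lim_seq_minus'. exact H1. apply is_lim_seq_const. }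
      assert (A2 : is_lim_seq (fun n => Rabs (snd (u (s1 (s2 n))) - l2)) 0).
      { replace (Finite 0) with (Rbar_abs (Finite (l2 - l2))) by (simpl; rewrite Rminus_diag, Rabs_R0; auto).
        apply (is_lim_seq_abs (fun n => snd (u (s1 (s2 n))) - l2)). apply is_lim_seq_minus'. exact H2. apply is_lim_seq_const. }
      pose proof (is_lim_seq_plus' _ _ _ _ A1 A2) as A3.
      pose proof (is_lim_seq_scal_l _ 2 _ A3) as A4. simpl in A4. rewrite Rplus_0_r, Rmult_0_r in A4. exact A4.
Qed.

Lemma INR_SS_ne k : RtoC (INR (S (S k))) <> RtoC 0.
Proof. intros E. apply RtoC_inj in E. pose proof (pos_INR (S k)). rewrite S_INR in E. lra. Qed.

Lemma phi_inX x : inX x -> inX (phi x).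
Proof.
  intros Hx j k. unfold phi. rewrite Cmod_div by apply INR_SS_ne. rewrite Cmod_R.
  pose proof (pos_INR (S k)). rewrite S_INR. rewrite Rabs_right by lra.
  apply (Rmult_le_reg_r (INR (S k) + 1)). lra. unfold Rdiv. rewrite Rmult_assoc, Rinv_l by lra.
  specialize (Hx j (S k)). lra.
Qed.

Lemma iter_inX n x : inX x -> inX (Nat.iter n phi x).
Proof. intros H; induction n; simpl; auto. apply phi_inX; auto. Qed.

Lemma polyfun_phi P : polyfun P -> polyfun (fun x => P (phi x)).
Proof.
  induction 1.
  - apply pf_const.
  - exact (pf_mul _ _ (pf_coord j (S k)) (pf_const (Cinv (RtoC (INR (S (S k))))))).
  - apply pf_add; auto.
  - apply pf_mul; auto.
Qed.

Lemma lin_Tphi : lin_endo Tphi.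
Proof.
  split; [|split; [|split]].
  - intros f Hf eps He. destruct (Hf eps He) as [P [HP HfP]].
    exists (fun x => P (phi x)). split. apply polyfun_phi; auto.
    intros x Hx. apply HfP. apply phi_inX; auto.
  - intros f g _ _ E x Hx. unfold Tphi. apply E, phi_inX; auto.
  - intros f g _ _ x _. reflexivity.
  - intros c f _ x _. reflexivity.
Qed.

Lemma op_pow_eq n f x : op_pow Tphi n f x = f (Nat.iter n phi x).
Proof.
  revert x. induction n; intros x. reflexivity.
  change (op_pow Tphi (S n) f x) with (op_pow Tphi n f (phi x)). rewrite IHn.
  rewrite <- Nat.iter_succ_r. reflexivity.
Qed.

Lemma fact_mul_le k n : (fact (k+1) * fact n <= fact (k + n + 1))%nat.
Proof.
  induction n.
  - simpl. rewrite Nat.add_0_r. lia.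
  - replace (k + S n + 1)%nat with (S (k + n + 1)) by lia.
    change (fact (S n)) with (S n * fact n)%nat. change (fact (S (k + n + 1))) with (S (k + n + 1) * fact (k + n + 1))%nat.
    nia.
Qed.

Lemma iter_bound n x j k : inX x ->
  Cmod (Nat.iter n phi x j k) <= INR (fact (k+1)) / INR (fact (k + n + 1)).
Proof.
  intros Hx. revert k. induction n; intros k.
  - simpl. rewrite Nat.add_0_r. unfold Rdiv. rewrite Rinv_r. apply Hx. apply INR_fact_neq_0.
  - change (Nat.iter (S n) phi x j k) with (phi (Nat.iter n phi x) j k). unfold phi at 1.
    rewrite Cmod_div by apply INR_SS_ne. rewrite Cmod_R.
    pose proof (pos_INR (S k)). rewrite (S_INR (S k)). rewrite Rabs_right by lra.
    specialize (IHn (S k)).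
    replace (S k + 1)%nat with (S (k + 1)) in IHn by lia.
    replace (S k + n + 1)%nat with (k + S n + 1)%nat in IHn by lia.
    rewrite fact_simpl, mult_INR in IHn. replace (S (k + 1)) with (S (S k)) in IHn by lia. rewrite (S_INR (S k)) in IHn.
    pose proof (INR_fact_lt_0 (k + S n + 1)). pose proof (INR_fact_lt_0 (k + 1)).
    apply (Rmult_le_reg_r (INR (S k) + 1)). lra. unfold Rdiv at 1. rewrite Rmult_assoc, Rinv_l by lra.
    rewrite Rmult_1_r. eapply Rle_trans. apply IHn. right. field. lra.
Qed.

Lemma iter_bound2 n x j k : inX x -> Cmod (Nat.iter n phi x j k) <= / INR (fact n).
Proof.
  intros Hx. eapply Rle_trans. apply iter_bound; auto.
  pose proof (fact_mul_le k n) as H. apply le_INR in H. rewrite mult_INR in H.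
  pose proof (INR_fact_lt_0 (k + n + 1)). pose proof (INR_fact_lt_0 (k + 1)). pose proof (INR_fact_lt_0 n).
  apply (Rmult_le_reg_r (INR (fact (k + n + 1)) * INR (fact n))). nra.
  replace (INR (fact (k + 1)) / INR (fact (k + n + 1)) * (INR (fact (k + n + 1)) * INR (fact n)))
    with (INR (fact (k + 1)) * INR (fact n)) by (field; lra).
  replace (/ INR (fact n) * (INR (fact (k + n + 1)) * INR (fact n))) with (INR (fact (k + n + 1))) by (field; lra).
  auto.
Qed.

Fixpoint w (n k : nat) : R := match n with O => 1 | S n => w n (S k) / INR (S (S k)) end.
Lemma w_pos n k : 0 < w n k.
Proof.
  revert k; induction n; intros k; simpl. lra.
  apply Rdiv_lt_0_compat; auto. pose proof (lt_0_INR (S (S k)) ltac:(lia)). simpl in H. exact H.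
Qed.

Lemma iter_formula n x j k : Nat.iter n phi x j k = Cmult (x j (k + n)%nat) (RtoC (w n k)).
Proof.
  revert k; induction n; intros k.
  - simpl. rewrite Nat.add_0_r. ring.
  - change (Nat.iter (S n) phi x j k) with (phi (Nat.iter n phi x) j k). unfold phi at 1.
    rewrite IHn. replace (S k + n)%nat with (k + S n)%nat by lia.
    change (w (S n) k) with (w n (S k) / INR (S (S k))).
    rewrite RtoC_div. 2: { intros E. apply (INR_SS_ne k). rewrite E. auto. }
    field. apply INR_SS_ne.
Qed.

Definition K0 : op := fun f _ => f z0.

Lemma K0_compact : compact_op K0.
Proof.
  split.
  - split; [|split; [|split]].
    + intros f Hf eps He. destruct (Hf eps He) as [P [HP HfP]].
      exists (fun _ => P z0). split. apply pf_const. intros; apply HfP, inX_z0.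
    + intros f g _ _ E x _. unfold K0. apply E, inX_z0.
    + intros f g _ _ x _. reflexivity.
    + intros c f _ x _. reflexivity.
  - intros u Hu.
    destruct (bw_complex (fun n => u n z0)) as [s [l [Hs Hl]]].
    { intros n. apply unit_ball. apply Hu. apply inX_z0. }
    exists s, (fun _ => l). split; auto. split.
    + apply polyfun_inA, pf_const.
    + eapply is_lim_seq_ext; [|exact Hl]. intros n. simpl.
      rewrite (sup_const _ (Cmod (Cminus (u (s n) z0) l))); auto.
Qed.

Lemma opnorm_bound n : (2 <= n)%nat ->
  exists r, opnorm (op_sub (op_pow Tphi n) K0) = Finite r /\ r <= 2 / INR (fact n).
Proof.
  intros Hn. set (b := 2 / INR (fact n)).
  assert (Hf2 : 2 <= INR (fact n)).
  { replace 2 with (INR 2) by (simpl; ring). apply le_INR.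
    destruct n as [|[|n]]; try lia. simpl. pose proof (lt_O_fact n). nia. }
  assert (Hb : forall r, (exists f, in_A f /\ Rbar_le (supnorm f) 1 /\
                  supnorm (op_sub (op_pow Tphi n) K0 f) = Finite r) -> r <= b).
  { intros r [f [Hf [Hf1 E]]].
    assert (H : Rbar_le (supnorm (op_sub (op_pow Tphi n) K0 f)) b).
    { apply sup_le. intros x Hx. unfold op_sub, K0. rewrite op_pow_eq.
      unfold b. replace (2 / INR (fact n)) with (2 * / INR (fact n)) by (unfold Rdiv; ring).
      apply schwarz; auto.
      - intros y Hy. apply unit_ball; auto.
      - split. apply Rinv_0_lt_compat; lra. apply (Rmult_le_reg_l (INR (fact n))). lra.
        rewrite Rinv_r by lra. lra.
      - intros j k. apply iter_bound2; auto. }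
    rewrite E in H. exact H. }
  assert (H0 : exists f, in_A f /\ Rbar_le (supnorm f) 1 /\
                  supnorm (op_sub (op_pow Tphi n) K0 f) = Finite 0).
  { exists (fun _ => RtoC 0). split. apply polyfun_inA, pf_const. split.
    - rewrite (sup_const _ 0). simpl; lra. intros; apply Cmod_0.
    - apply sup_const. intros x _. unfold op_sub, K0. rewrite op_pow_eq.
      replace (Cminus (RtoC 0) (RtoC 0)) with (RtoC 0) by ring. apply Cmod_0. }
  unfold opnorm. destruct (Lub_Rbar_correct (fun r => exists f, in_A f /\ Rbar_le (supnorm f) 1 /\
                  supnorm (op_sub (op_pow Tphi n) K0 f) = Finite r)) as [U1 U2].
  pose proof (U1 0 H0) as L1. assert (L2 : Rbar_le (Lub_Rbar (fun r => exists f, in_A f /\ Rbar_le (supnorm f) 1 /\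
                  supnorm (op_sub (op_pow Tphi n) K0 f) = Finite r)) b).
  { apply U2. intros r Hr. simpl. apply Hb; auto. }
  destruct (Lub_Rbar _) as [L| |]; simpl in *; try tauto.
  exists L. split; auto.
Qed.

Lemma ess_bound n : (2 <= n)%nat -> real (ess_norm_pow Tphi n) <= 2 / INR (fact n).
Proof.
  intros Hn. destruct (opnorm_bound n Hn) as [r [E Hr]].
  assert (0 <= 2 / INR (fact n)) by (apply Rlt_le, Rdiv_lt_0_compat; [lra|apply INR_fact_lt_0]).
  unfold ess_norm_pow. destruct (Glb_Rbar_correct (fun r => exists K, compact_op K /\
                       opnorm (op_sub (op_pow Tphi n) K) = Finite r)) as [G1 _].
  pose proof (G1 r (ex_intro _ K0 (conj K0_compact E))) as H1.
  destruct (Glb_Rbar _); simpl in *; try tauto; lra.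
Qed.

Definition nroot_le a b n : (1 <= n)%nat -> a <= b -> 0 < b -> nroot a n <= nroot b n.
Proof.
  intros Hn Hab Hb. unfold nroot. destruct (Rle_dec a 0); destruct (Rle_dec b 0); try lra.
  - unfold Rpower. left; apply exp_pos.
  - apply Rle_Rpower_l. apply Rlt_le, Rinv_0_lt_compat, lt_0_INR; lia. lra.
Qed.

Lemma riesz_Tphi : riesz_op Tphi.
Proof.
  unfold riesz_op. apply is_lim_seq_Reals. intros eps He.
  set (q := eps / 2).
  assert (Hq : 0 < q) by (unfold q; lra).
  destruct (cv_speed_pow_fact (/ q) (1/2) ltac:(lra)) as [N1 HN1].
  exists (N1 + 2)%nat. intros n Hn. unfold Rdist. rewrite Rminus_0_r.
  specialize (HN1 n ltac:(lia)). unfold Rdist in HN1. rewrite Rminus_0_r in HN1.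
  pose proof (INR_fact_lt_0 n) as Hf.
  assert (Hqn : 0 < q ^ n) by (apply pow_lt; auto).
  assert (Hb : 2 / INR (fact n) <= q ^ n).
  { rewrite Rabs_right in HN1. 2: { apply Rle_ge, Rmult_le_pos. apply pow_le. left; apply Rinv_0_lt_compat; auto. left; apply Rinv_0_lt_compat; auto. }
    rewrite pow_inv in HN1.
    apply (Rmult_lt_compat_r (2 * q ^ n * INR (fact n))) in HN1; [|nra].
    replace (/ q ^ n / INR (fact n) * (2 * q ^ n * INR (fact n))) with 2 in HN1 by (field; lra).
    apply (Rmult_le_reg_r (INR (fact n))); auto. unfold Rdiv. rewrite Rmult_assoc, Rinv_l by lra. nra. }
  pose proof (ess_bound n ltac:(lia)) as Hess.
  assert (Hn1 : (1 <= n)%nat) by lia.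
  pose proof (nroot_le _ _ n Hn1 (Rle_trans _ _ _ Hess Hb) Hqn) as H1.
  assert (E : nroot (q ^ n) n = q).
  { unfold nroot. destruct (Rle_dec (q ^ n) 0); try lra.
    rewrite <- Rpower_pow by auto. rewrite Rpower_mult. rewrite Rinv_r. apply Rpower_1; auto.
    apply not_0_INR; lia. }
  assert (H0 : 0 <= nroot (real (ess_norm_pow Tphi n)) n).
  { unfold nroot. destruct Rle_dec. lra. unfold Rpower. left; apply exp_pos. }
  assert (q < eps) by (unfold q; lra). rewrite Rabs_right by lra. lra.
Qed.

Lemma polyfun_bounded P : polyfun P -> exists M, 0 <= M /\ forall x, inX x -> Cmod (P x) <= M.
Proof.
  induction 1.
  - exists (Cmod c). split. apply Cmod_ge_0. intros; lra.
  - exists 1. split. lra. intros x Hx; apply Hx.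
  - destruct IHpolyfun1 as [M1 [P1 H1]], IHpolyfun2 as [M2 [P2 H2]]. exists (M1 + M2). split. lra.
    intros x Hx. eapply Rle_trans. apply Cmod_triangle. specialize (H1 x Hx). specialize (H2 x Hx). lra.
  - destruct IHpolyfun1 as [M1 [P1 H1]], IHpolyfun2 as [M2 [P2 H2]]. exists (M1 * M2). split. nra.
    intros x Hx. rewrite Cmod_mult. specialize (H1 x Hx). specialize (H2 x Hx).
    pose proof (Cmod_ge_0 (f x)). pose proof (Cmod_ge_0 (g x)). nra.
Qed.

Lemma inA_bounded g : in_A g -> exists M, forall x, inX x -> Cmod (g x) <= M.
Proof.
  intros Hg. destruct (Hg 1 ltac:(lra)) as [P [HP HgP]]. destruct (polyfun_bounded P HP) as [M [_ HM]].
  exists (M + 1). intros x Hx. replace (g x) with (Cplus (P x) (Cminus (g x) (P x))) by ring.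
  eapply Rle_trans. apply Cmod_triangle. specialize (HM x Hx). specialize (HgP x Hx). lra.
Qed.

Lemma not_pc : ~ power_compact Tphi.
Proof.
  intros [N [_ [_ Hc]]].
  set (u := fun (n : nat) (x : pt) => x n O).
  destruct (Hc u) as [s [g [Hs [Hg Hlim]]]].
  { intros n. split. apply polyfun_inA, pf_coord. apply sup_le. intros x Hx; apply Hx. }
  destruct (inA_bounded g Hg) as [M HM].
  set (h := fun n x => Cminus (op_pow Tphi N (u (s n)) x) (g x)).
  assert (Hh : forall n x, inX x -> Cmod (h n x) <= 1 + M).
  { intros n x Hx. unfold h. rewrite op_pow_eq. unfold u. unfold Cminus.
    eapply Rle_trans. apply Cmod_triangle. rewrite Cmod_opp.
    pose proof (iter_inX N x Hx (s n) O). specialize (HM x Hx). lra. }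
  change (is_lim_seq (fun n => real (supnorm (h n))) 0) in Hlim.
  set (c := w N 0). assert (Hc0 : 0 < c) by apply w_pos.
  apply is_lim_seq_Reals in Hlim. destruct (Hlim (c / 2) ltac:(lra)) as [N0 HN0].
  set (xp := fun j k : nat => if andb (Nat.eqb j (s N0)) (Nat.eqb k N) then RtoC 1 else RtoC 0).
  assert (Hxp : inX xp).
  { intros j k. unfold xp. destruct (andb _ _); [rewrite Cmod_1|rewrite Cmod_0]; lra. }
  assert (B : forall n, (N0 <= n)%nat -> Cmod (h n xp) < c / 2).
  { intros n Hn. destruct (sup_fin (h n) (1 + M) (Hh n)) as [_ [_ H3]].
    specialize (HN0 n Hn). unfold Rdist in HN0. rewrite Rminus_0_r in HN0.
    pose proof (H3 xp Hxp). pose proof (Rle_abs (real (supnorm (h n)))). lra. }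
  assert (E1 : h N0 xp = Cminus (RtoC c) (g xp)).
  { unfold h. rewrite op_pow_eq. unfold u. rewrite iter_formula. simpl (0 + N)%nat.
    unfold xp. rewrite !Nat.eqb_refl. simpl. fold c. ring. }
  assert (E2 : h (S N0) xp = Cminus (RtoC 0) (g xp)).
  { unfold h. rewrite op_pow_eq. unfold u. rewrite iter_formula. simpl (0 + N)%nat.
    unfold xp. replace (Nat.eqb (s (S N0)) (s N0)) with false. simpl. ring.
    symmetry. apply Nat.eqb_neq. specialize (Hs N0). lia. }
  pose proof (B N0 ltac:(lia)) as B1. pose proof (B (S N0) ltac:(lia)) as B2.
  rewrite E1 in B1. rewrite E2 in B2.
  replace (Cminus (RtoC 0) (g xp)) with (Copp (g xp)) in B2 by ring. rewrite Cmod_opp in B2.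
  assert (Cmod (RtoC c) <= Cmod (Cminus (RtoC c) (g xp)) + Cmod (g xp)).
  { replace (RtoC c) with (Cplus (Cminus (RtoC c) (g xp)) (g xp)) at 1 by ring. apply Cmod_triangle. }
  rewrite Cmod_R, Rabs_right in H by lra. lra.
Qed.

Theorem theorem4p3 :
  (forall x, inX x -> inX (phi x)) /\
  lin_endo Tphi /\
  eqX (Tphi (fun _ => RtoC 1)) (fun _ => RtoC 1) /\
  (forall f g, in_A f -> in_A g ->
     eqX (Tphi (fun x => Cmult (f x) (g x))) (fun x => Cmult (Tphi f x) (Tphi g x))) /\
  riesz_op Tphi /\
  ~ power_compact Tphi.
Proof.
  split. exact phi_inX. split. exact lin_Tphi. split. intros x _; reflexivity.
  split. intros f g _ _ x _; reflexivity. split. exact riesz_Tphi. exact not_pc.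
Qed.
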